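(* Let $\mathcal{D}=\{1,\dots,n\}$ and let $U:2^{\mathcal{D}}\to\mathbb{R}_{\ge0}$ be monotone submodular with $U(\emptyset)=0$, $U(\{i\})>0$ for all $i$, and curvature $c\in[0,1]$. Let $v$ be a weighted-marginal data value as defined in the context (e.g. any semi-value, Data Shapley, Data Banzhaf, or leave-one-out). Order $\mathcal{D}$ in decreasing order of $v$ (ties broken arbitrarily) and let $G_k$ be the set of the first $k$ elements. For each $k$ let $OPT_k\in\operatorname{argmax}_{S\subseteq\mathcal{D},|S|\le k}U(S)$. Then for every $k\in\{1,\dots,n\}$, $$U(G_k)\ge(1-c)^2\,U(OPT_k),$$ and consequently, for every $K\le n$, $$\sum_{k=1}^K U(G_k)\ge (1-c)^2\sum_{k=1}^K U(OPT_k).$$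
   Context: $U$ is monotone if $U(A)\le U(B)$ whenever $A\subseteq B$, and submodular if $U(A\cup\{i\})-U(A)\ge U(B\cup\{i\})-U(B)$ whenever $A\subseteq B\subseteq\mathcal{D}$ and $i\in\mathcal{D}\setminus B$. The curvature of $U$ is $c=1-\min_{i\in\mathcal{D}}\frac{U(\mathcal{D})-U(\mathcal{D}\setminus\{i\})}{U(\{i\})}$. A weighted-marginal data value is $v(i)=\sum_{S\subseteq\mathcal{D}\setminus\{i\}}w_i(S)\,[U(S\cup\{i\})-U(S)]$, where for each $i$ the weights satisfy $w_i(S)\ge0$ and $\sum_{S\subseteq\mathcal{D}\setminus\{i\}}w_i(S)=1$. (Semi-values are the case $w_i(S)=\beta_{|S|}$ with $\beta_k\ge0$, $\sum_{k=0}^{n-1}\binom{n-1}{k}\beta_k=1$; leave-one-out is $w_i(S)=1$ iff $S=\mathcal{D}\setminus\{i\}$.) *)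

(* Defs.v *)
From HB Require Import structures.
From mathcomp Require Import all_boot all_order all_algebra all_fingroup.
Set Implicit Arguments. Unset Strict Implicit. Unset Printing Implicit Defensive.
Import Order.TTheory GRing.Theory Num.Theory.
Local Open Scope ring_scope.

(* Ground set D = {1..n} is modelled by 'I_n; utilities are U : {set 'I_n} -> R. *)

Definition monotone_fn (R : realFieldType) (n : nat) (U : {set 'I_n} -> R) :=
  forall A B : {set 'I_n}, A \subset B -> U A <= U B.

Definition submodular_fn (R : realFieldType) (n : nat) (U : {set 'I_n} -> R) :=
  forall (A B : {set 'I_n}) (i : 'I_n), A \subset B -> i \notin B ->
    U (i |: A) - U A >= U (i |: B) - U B.

(* c is the curvature 1 - min_i (U(D) - U(D \ {i})) / U({i}):
   c is 1 minus the minimum of the ratios (the minimum is attained and is a lower bound). *)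
Definition curvature_ratio (R : realFieldType) (n : nat) (U : {set 'I_n} -> R) (i : 'I_n) : R :=
  (U [set: 'I_n] - U ([set: 'I_n] :\ i)) / U [set i].

Definition is_curvature (R : realFieldType) (n : nat) (U : {set 'I_n} -> R) (c : R) :=
  (exists i : 'I_n, curvature_ratio U i = 1 - c) /\
  (forall i : 'I_n, 1 - c <= curvature_ratio U i).

Definition valid_weights (R : realFieldType) (n : nat) (w : 'I_n -> {set 'I_n} -> R) :=
  (forall (i : 'I_n) (S : {set 'I_n}), i \notin S -> 0 <= w i S) /\
  (forall i, \sum_(S : {set 'I_n} | i \notin S) w i S = 1).

Definition wm_value (R : realFieldType) (n : nat) (U : {set 'I_n} -> R)
  (w : 'I_n -> {set 'I_n} -> R) (i : 'I_n) : R :=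
  \sum_(S : {set 'I_n} | i \notin S) w i S * (U (i |: S) - U S).

Definition decreasing_order (R : realFieldType) (n : nat) (v : 'I_n -> R) (sigma : 'S_n) :=
  forall a b : 'I_n, (a <= b)%N -> v (sigma b) <= v (sigma a).

Definition prefix_set (n : nat) (sigma : 'S_n) (k : nat) : {set 'I_n} :=
  [set sigma j | j : 'I_n & (j < k)%N].

Definition is_opt (R : realFieldType) (n : nat) (U : {set 'I_n} -> R) (k : nat) (O : {set 'I_n}) :=
  (#|O| <= k)%N /\ forall S : {set 'I_n}, (#|S| <= k)%N -> U S <= U O.

(* Main.v *)
Require Import Defs.
From HB Require Import structures.
From mathcomp Require Import all_boot all_order all_algebra all_fingroup.
From mathcomp Require Import zify.
Import Order.TTheory GRing.Theory Num.Theory.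
Local Open Scope ring_scope.

Lemma set_ind_gen (T : finType) (P : {set T} -> Prop) :
  P set0 -> (forall (i : T) (A : {set T}), i \notin A -> P A -> P (i |: A)) -> forall A, P A.
Proof.
move=> h0 hS A; move: {2}#|A| (erefl #|A|) => m; elim: m A => [|m IH] A hA.
  by move/eqP: hA; rewrite cards_eq0 => /eqP ->.
have [i iA] : exists i, i \in A by apply/set0Pn; rewrite -card_gt0 hA.
rewrite -(setD1K iA); apply: hS; first by rewrite setD11.
by apply: IH; move: hA; rewrite (cardsD1 i) iA add1n => -[].
Qed.

Lemma card_lt_ord (n k : nat) : (k <= n)%N -> #|[set j : 'I_n | (j < k)%N]| = k.
Proof.
move=> hk.
have -> : [set j : 'I_n | (j < k)%N] = [set widen_ord hk j | j : 'I_k].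
  apply/setP => j; rewrite inE; apply/idP/imsetP.
    by move=> hj; exists (Ordinal hj) => //; apply: val_inj.
  by case=> j' _ ->; rewrite /= ltn_ord.
rewrite card_imset ?card_ord //.
by move=> a b /(congr1 val) /= e; apply: val_inj.
Qed.

Section Main.
Variables (R : realFieldType) (n : nat) (U : {set 'I_n} -> R).
Hypothesis hU0 : U set0 = 0.
Hypothesis hsub : submodular_fn U.

Lemma lower_sum (A : {set 'I_n}) :
  \sum_(i in A) (U [set: 'I_n] - U ([set: 'I_n] :\ i)) <= U A.
Proof.
elim/set_ind_gen: A => [|i A iA IH]; first by rewrite big_set0 hU0.
rewrite big_setU1 //=.
have h : U [set: 'I_n] - U ([set: 'I_n] :\ i) <= U (i |: A) - U A.
  have := hsub A ([set: 'I_n] :\ i) i.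
  rewrite setD1K ?in_setT // setD11; apply => //.
  apply/subsetP => x xA; rewrite in_setD1 in_setT andbT.
  by apply/eqP => e; subst x; rewrite xA in iA.
have := lerD h IH. by rewrite subrK.
Qed.

Lemma upper_sum (A : {set 'I_n}) : U A <= \sum_(i in A) U [set i].
Proof.
elim/set_ind_gen: A => [|i A iA IH]; first by rewrite big_set0 hU0.
rewrite big_setU1 //=.
have h : U (i |: A) - U A <= U [set i].
  have := hsub set0 (A) i.
  by rewrite setU0 hU0 subr0; apply => //; apply: sub0set.
have := lerD h IH. by rewrite subrK.
Qed.

End Main.

Lemma topk (R : realFieldType) (T : finType) (v : T -> R) (m : R)
  (G O : {set T}) : 0 <= m -> (forall x, x \in G -> m <= v x) ->
  (forall x, x \notin G -> v x <= m) -> (#|O| <= #|G|)%N ->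
  \sum_(i in O) v i <= \sum_(i in G) v i.
Proof.
move=> m0 hG hN hc.
rewrite (big_setID (A:=O) G) (big_setID (A:=G) O) /= setIC lerD2l.
apply: (le_trans (y := \sum_(i in O :\: G) m)).
  by apply: ler_sum => i; rewrite inE => /andP[/hN].
apply: (le_trans (y := \sum_(i in G :\: O) m)); last first.
  by apply: ler_sum => i; rewrite inE => /andP[_ /hG].
rewrite !sumr_const; apply: ler_wpMn2l => //.
have := cardsID G O; have := cardsID O G; rewrite setIC. lia.
Qed.

Theorem theorem4p3 (R : realFieldType) (n : nat) (U : {set 'I_n} -> R) (c : R)
  (w : 'I_n -> {set 'I_n} -> R) (sigma : 'S_n)
  (hU0 : U set0 = 0)
  (hUnn : forall S, 0 <= U S)
  (hmono : monotone_fn U)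
  (hsub : submodular_fn U)
  (hsing : forall i : 'I_n, 0 < U [set i])
  (hc : is_curvature U c)
  (hc01 : 0 <= c <= 1)
  (hw : valid_weights w)
  (hsigma : decreasing_order (wm_value U w) sigma) :
  (forall (k : nat) (O : {set 'I_n}), (1 <= k <= n)%N -> is_opt U k O ->
     (1 - c) ^+ 2 * U O <= U (prefix_set sigma k)) /\
  (forall (K : nat) (OPT : nat -> {set 'I_n}), (K <= n)%N ->
     (forall k, (1 <= k <= K)%N -> is_opt U k (OPT k)) ->
     (1 - c) ^+ 2 * \sum_(1 <= k < K.+1) U (OPT k)
       <= \sum_(1 <= k < K.+1) U (prefix_set sigma k)).
Proof.
set v := wm_value U w.
set md := fun i => U [set: 'I_n] - U ([set: 'I_n] :\ i).
have c1 : 0 <= 1 - c by case/andP: hc01 => _; rewrite subr_ge0.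
have L1 : forall i, (1 - c) * U [set i] <= md i.
  move=> i; case: hc => _ /(_ i); rewrite /curvature_ratio ler_pdivlMr //.
have L2 : forall i, md i <= v i.
  move=> i; case: hw => hw0 hw1.
  rewrite /v /wm_value -[md i]mul1r -(hw1 i) mulr_suml.
  apply: ler_sum => S iS; apply: ler_wpM2l; first exact: hw0.
  have := hsub S ([set: 'I_n] :\ i) i.
  rewrite /md setD1K ?in_setT // setD11; apply => //.
  apply/subsetP => x xA; rewrite in_setD1 in_setT andbT.
  by apply/eqP => e; subst x; rewrite xA in iS.
have L3 : forall i, v i <= U [set i].
  move=> i; case: hw => hw0 hw1.
  rewrite /v /wm_value -[U [set i]]mul1r -(hw1 i) mulr_suml.
  apply: ler_sum => S iS; apply: ler_wpM2l; first exact: hw0.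
  have := hsub set0 (S) i.
  by rewrite setU0 hU0 subr0; apply => //; apply: sub0set.
have v0 : forall i, 0 <= v i.
  move=> i; apply: le_trans (L2 i); apply: le_trans (L1 i).
  by apply: mulr_ge0 => //; apply: ltW.
have P1 : forall (k : nat) (O : {set 'I_n}), (1 <= k <= n)%N -> is_opt U k O ->
     (1 - c) ^+ 2 * U O <= U (prefix_set sigma k).
  move=> k O /andP[k1 kn] [cO _].
  set G := prefix_set sigma k.
  have kn' : (k.-1 < n)%N by rewrite prednK.
  set j0 := Ordinal kn'.
  have topk' : \sum_(i in O) v i <= \sum_(i in G) v i.
    apply: (@topk _ _ v (v (sigma j0))) => //.
    - move=> x /imsetP [j]; rewrite inE => jk ->; apply: hsigma => /=.
      by rewrite -ltnS prednK.
    - move=> x xG; rewrite -(permKV sigma x); apply: hsigma => /=.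
      rewrite -ltnS prednK // leqNgt; apply/negP => h; apply: (negP xG).
      rewrite -(permKV sigma x) /G /prefix_set; apply: imset_f; rewrite inE; exact: ltnW.
    - by rewrite /G /prefix_set card_imset ?card_lt_ord //; apply: perm_inj.
  apply: (le_trans (y := (1 - c) ^+ 2 * \sum_(i in O) U [set i])).
    by apply: ler_wpM2l; [apply: exprn_ge0 | apply: upper_sum].
  apply: le_trans _ (@lower_sum _ _ U hU0 hsub G).
  rewrite expr2 -mulrA mulr_sumr.
  apply: (le_trans (y := (1 - c) * \sum_(i in O) v i)).
    apply: ler_wpM2l => //; apply: ler_sum => i _; exact: le_trans (L1 i) (L2 i).
  apply: (le_trans (y := (1 - c) * \sum_(i in G) U [set i])).
    apply: ler_wpM2l => //; apply: le_trans topk' _; apply: ler_sum => i _; exact: L3.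
  by rewrite mulr_sumr; apply: ler_sum => i _; exact: L1.
split => //.
move=> K OPT KN hO; rewrite mulr_sumr; apply: ler_sum_nat => k /andP[k1 kK].
apply: P1; last by apply: hO; rewrite k1 -ltnS.
by rewrite k1 /=; apply: leq_trans KN; rewrite -ltnS.
Qed.
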